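(* Let $n\ge2$ and let $R=\frac1n E_n$ be the $n\times n$ comonotone checkerboard copula ($E_n$ the identity matrix). For every $n\times n$ checkerboard copula $P\neq R$, the function $\alpha\mapsto\tau(\alpha R+(1-\alpha)P)$ is strictly increasing on $[0,1]$.
   Context: An $n\times n$ checkerboard copula is a real $n\times n$ matrix with nonnegative entries whose row and column sums all equal $\frac1n$. $\Xi=(\xi_{ij})$ with $\xi_{ij}=1$ if $i=j$, $2$ if $i>j$, $0$ if $i<j$. For an $n\times n$ matrix $M$, $\tau(M)=1-\mathrm{tr}(\Xi M\Xi M^\top)$ (Kendall's $\tau$ of a checkerboard copula). *)

(* Defs.v *)
From HB Require Import structures.
From mathcomp Require Import all_boot all_order all_algebra.
From mathcomp Require Import reals.
Set Implicit Arguments. Unset Strict Implicit. Unset Printing Implicit Defensive.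
Import Order.TTheory GRing.Theory Num.Theory.
Local Open Scope ring_scope.

Definition checkerboard {R : realType} (n : nat) (M : 'M[R]_n) : Prop :=
  (forall i j, 0 <= M i j) /\
  (forall i, \sum_(j < n) M i j = n%:R^-1) /\
  (forall j, \sum_(i < n) M i j = n%:R^-1).

Definition Xi {R : realType} (n : nat) : 'M[R]_n :=
  \matrix_(i < n, j < n)
    (if i == j then 1 else if (j < i)%N then 2 else 0).

Definition tau {R : realType} (n : nat) (M : 'M[R]_n) : R :=
  1 - \tr (Xi n *m M *m Xi n *m M^T).

Definition comonotone {R : realType} (n : nat) : 'M[R]_n := n%:R^-1 *: 1%:M.

(* Main.v *)
Require Import Defs.
From HB Require Import structures.
From mathcomp Require Import all_boot all_order all_algebra.
From mathcomp Require Import reals.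
From mathcomp Require Import zify lra ring.
Import Order.TTheory GRing.Theory Num.Theory.
Local Open Scope ring_scope.

Section S.
Variable R : realType.
Variable n : nat.
Hypothesis n0 : (0 < n)%N.

Definition sg (i k : 'I_n) : R :=
  if (k < i)%N then 1 else if (i < k)%N then -1 else 0.

Lemma sg_anti i k : sg k i = - sg i k.
Proof. rewrite /sg; case: (ltngtP k i) => h //=; by rewrite ?opprK ?oppr0. Qed.

Lemma sg_self i : sg i i = 0.
Proof. by rewrite /sg ltnn. Qed.

Lemma Xi_sg i k : Xi n i k = 1 + sg i k.
Proof.
rewrite /Xi mxE /sg; case: (eqVneq i k) => [->|ne]; first by rewrite ltnn addr0.
have ne' : (nat_of_ord i != nat_of_ord k) by [].
case: (ltngtP k i) => h //=.
  by rewrite subrr.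
by move: ne'; rewrite h eqxx.
Qed.

Lemma Xi_if (l j : 'I_n) : (if l == j then 1 else if (j < l)%N then 2 else 0) = 1 + sg l j :> R.
Proof. by have := Xi_sg l j; rewrite /Xi mxE. Qed.

Definition K (X Y : 'M[R]_n) : R :=
  \sum_(p : 'I_n * 'I_n) \sum_(q : 'I_n * 'I_n)
     X p.1 p.2 * Y q.1 q.2 * (sg p.1 q.1 * sg p.2 q.2).

Definition Q (X Y : 'M[R]_n) : R :=
  \sum_(p : 'I_n * 'I_n) \sum_(q : 'I_n * 'I_n)
     X p.1 p.2 * Y q.1 q.2 * ((1 + sg p.1 q.1) * (1 - sg p.2 q.2)).

Lemma tr_Q M : \tr (Xi n *m M *m Xi n *m M^T) = Q M M.
Proof.
rewrite /Q /mxtrace.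

rewrite -(pair_bigA _ (fun i j => \sum_(q : 'I_n * 'I_n) M i j * M q.1 q.2 * ((1 + sg i q.1) * (1 - sg j q.2)))) /=.
apply: eq_bigr => i _.
rewrite mxE.
apply: eq_bigr => j _.
rewrite !mxE big_distrl /= -(pair_bigA _ (fun k l => M i j * M k l * ((1 + sg i k) * (1 - sg j l)))) /= exchange_big /=.
apply: eq_bigr => l _; rewrite !mxE big_distrl /= big_distrl /=.
apply: eq_bigr => k _. rewrite (Xi_sg i k) Xi_if (sg_anti j l); ring.
Qed.


Definition rc (X : 'M[R]_n) :=
  (forall i, \sum_j X i j = n%:R^-1) /\ (forall j, \sum_i X i j = n%:R^-1).

Lemma sum_row_pair X (f : 'I_n -> R) : rc X ->
  \sum_(p : 'I_n * 'I_n) X p.1 p.2 * f p.1 = n%:R^-1 * \sum_i f i.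
Proof.
move=> [hr hc].
rewrite -(pair_bigA _ (fun i j => X i j * f i)) /= mulr_sumr.
by apply: eq_bigr => i _; rewrite -big_distrl /= hr.
Qed.

Lemma sum_col_pair X (f : 'I_n -> R) : rc X ->
  \sum_(p : 'I_n * 'I_n) X p.1 p.2 * f p.2 = n%:R^-1 * \sum_i f i.
Proof.
move=> [hr hc].
rewrite -(pair_bigA _ (fun i j => X i j * f j)) /= exchange_big /= mulr_sumr.
by apply: eq_bigr => j _; rewrite -big_distrl /= hc.
Qed.

Lemma nV_n : n%:R^-1 *+ n = 1 :> R.
Proof. rewrite -[_ *+ n]mulr_natr mulVf // pnatr_eq0 -lt0n; exact: n0. Qed.

Lemma sum_all X : rc X -> \sum_(p : 'I_n * 'I_n) X p.1 p.2 = 1.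
Proof.
move=> [hr hc].
rewrite -(pair_bigA _ (fun i j => X i j)) /=.
under eq_bigr do rewrite hr.
by rewrite sumr_const card_ord nV_n.
Qed.

Lemma sum_sg0 : \sum_i \sum_k sg i k = 0.
Proof.
set A := \sum_i \sum_k sg i k.
have : A = - A.
  rewrite {1}/A exchange_big /A -sumrN; apply: eq_bigr => k _.
  rewrite -sumrN; apply: eq_bigr => i _; exact: sg_anti.
lra.
Qed.

Lemma QK X Y : rc X -> rc Y -> Q X Y = 1 - K X Y.
Proof.
move=> hX hY.
have e : Q X Y = \sum_(p : 'I_n * 'I_n) \sum_(q : 'I_n * 'I_n) X p.1 p.2 * Y q.1 q.2
   + \sum_(p : 'I_n * 'I_n) \sum_(q : 'I_n * 'I_n) X p.1 p.2 * Y q.1 q.2 * sg p.1 q.1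
   - \sum_(p : 'I_n * 'I_n) \sum_(q : 'I_n * 'I_n) X p.1 p.2 * Y q.1 q.2 * sg p.2 q.2
   - K X Y.
  rewrite /Q /K -big_split -!sumrB /=; apply: eq_bigr => p _.
  rewrite -big_split -!sumrB /=; apply: eq_bigr => q _; ring.
have e0 : \sum_(p : 'I_n * 'I_n) \sum_(q : 'I_n * 'I_n) X p.1 p.2 * Y q.1 q.2 = 1.
  under eq_bigr do rewrite -mulr_sumr sum_all //.
  by under eq_bigr do rewrite mulr1; rewrite sum_all.
have e1 : \sum_(p : 'I_n * 'I_n) \sum_(q : 'I_n * 'I_n) X p.1 p.2 * Y q.1 q.2 * sg p.1 q.1 = 0.
  under eq_bigr do under eq_bigr do rewrite -mulrA.
  under eq_bigr do rewrite -mulr_sumr (sum_row_pair Y (fun k => sg _ k) hY).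
  rewrite (sum_row_pair X (fun i => n%:R^-1 * \sum_k sg i k) hX) -mulr_sumr.
  by rewrite sum_sg0 !mulr0.
have e2 : \sum_(p : 'I_n * 'I_n) \sum_(q : 'I_n * 'I_n) X p.1 p.2 * Y q.1 q.2 * sg p.2 q.2 = 0.
  under eq_bigr do under eq_bigr do rewrite -mulrA.
  under eq_bigr do rewrite -mulr_sumr (sum_col_pair Y (fun k => sg _ k) hY).
  rewrite (sum_col_pair X (fun i => n%:R^-1 * \sum_k sg i k) hX) -mulr_sumr.
  by rewrite sum_sg0 !mulr0.
by rewrite e e0 e1 e2 addr0 subr0.
Qed.


Lemma sum_delta (F : 'I_n -> R) k : \sum_l ((k == l)%:R * F l) = F k.
Proof.
rewrite (bigD1 k) //= eqxx mul1r big1 ?addr0 // => l /negbTE.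
by rewrite eq_sym => ->; rewrite mul0r.
Qed.

Lemma comoE i j : (comonotone n : 'M[R]_n) i j = n%:R^-1 * (i == j)%:R.
Proof. by rewrite /comonotone !mxE. Qed.

Lemma rc_R : rc (comonotone n).
Proof.
split=> i.
  under eq_bigr do rewrite comoE mulrC.
  by rewrite (sum_delta (fun _ => n%:R^-1)).
under eq_bigr do rewrite comoE mulrC eq_sym.
by rewrite (sum_delta (fun _ => n%:R^-1)).
Qed.

Lemma rc_comb a X Y : rc X -> rc Y -> rc (a *: X + (1 - a) *: Y).
Proof.
move=> [hX1 hX2] [hY1 hY2]; split=> i.
  under eq_bigr do rewrite !mxE.
  by rewrite big_split /= -!mulr_sumr hX1 hY1; ring.
under eq_bigr do rewrite !mxE.
by rewrite big_split /= -!mulr_sumr hX2 hY2; ring.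
Qed.

Lemma tau_K M : rc M -> tau M = K M M.
Proof. by move=> h; rewrite /tau tr_Q QK // opprB addrC subrK. Qed.

Lemma K_sym X Y : K X Y = K Y X.
Proof.
rewrite /K exchange_big; apply: eq_bigr => p _; apply: eq_bigr => q _.
rewrite (sg_anti p.1 q.1) (sg_anti p.2 q.2); ring.
Qed.

Lemma K_quad a b X Y : K (a *: X + b *: Y) (a *: X + b *: Y) =
  a ^+ 2 * K X X + a * b * K X Y + a * b * K Y X + b ^+ 2 * K Y Y.
Proof.
rewrite /K !mulr_sumr -!big_split; apply: eq_bigr => p _.
rewrite !mulr_sumr -!big_split; apply: eq_bigr => q _.
rewrite /= !mxE; ring.
Qed.

Definition g (i j : 'I_n) : R := n%:R^-1 * \sum_k sg i k * sg j k.

Lemma KR X : K X (comonotone n) = \sum_(p : 'I_n * 'I_n) X p.1 p.2 * g p.1 p.2.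
Proof.
rewrite /K; apply: eq_bigr => p _.
under eq_bigr do rewrite comoE.
rewrite -(pair_bigA _ (fun k l => X p.1 p.2 * (n%:R^-1 * (k == l)%:R) * (sg p.1 k * sg p.2 l))) /=.
have H : forall k, \sum_l X p.1 p.2 * (n%:R^-1 * (k == l)%:R) * (sg p.1 k * sg p.2 l)
   = X p.1 p.2 * n%:R^-1 * (sg p.1 k * sg p.2 k).
  move=> k.
  transitivity (\sum_l (k == l)%:R * (X p.1 p.2 * n%:R^-1 * (sg p.1 k * sg p.2 l))).
    by apply: eq_bigr => l _; ring.
  by rewrite sum_delta.
under eq_bigr do rewrite H.
by rewrite /g -mulr_sumr mulrA.
Qed.


Lemma inner_gen X i j (h h' : 'I_n -> R) : rc X ->
  (forall k l, sg i k * sg j l <= h k + h' l) ->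
  (forall k, h k + h' k = sg i k * sg j k) ->
  (forall p q, 0 <= X p q) ->
  \sum_(q : 'I_n * 'I_n) X q.1 q.2 * (sg i q.1 * sg j q.2) <= g i j.
Proof.
move=> hX H1 H2 hpos.
apply: (@le_trans _ _ (\sum_(q : 'I_n * 'I_n) X q.1 q.2 * (h q.1 + h' q.2))).
  apply: ler_sum => q _; apply: ler_wpM2l => //; exact: H1.
under eq_bigr do rewrite mulrDr.
rewrite big_split /= (sum_row_pair X h hX) (sum_col_pair X h' hX) -mulrDr -big_split /g.
have -> : \sum_k (h k + h' k) = \sum_k sg i k * sg j k.
  by apply: eq_bigr => k _; exact: H2.
by [].
Qed.

Lemma inner X i j : rc X -> (forall p q, 0 <= X p q) ->
  \sum_(q : 'I_n * 'I_n) X q.1 q.2 * (sg i q.1 * sg j q.2) <= g i j.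
Proof.
move=> hX hpos.
case: (ltngtP i j) => hij.
- apply: (@inner_gen X i j (fun k => sg i k + 1) (fun l => - sg j l)) => // [k l|k].
    rewrite /sg; case: (ltngtP k i) => ?; case: (ltngtP l j) => ?; lra.
  rewrite /sg; case: (ltngtP k i) => ?; case: (ltngtP k j) => ?; try lia; lra.
- apply: (@inner_gen X i j (fun k => 1 - sg i k) (fun l => sg j l)) => // [k l|k].
    rewrite /sg; case: (ltngtP k i) => ?; case: (ltngtP l j) => ?; lra.
  rewrite /sg; case: (ltngtP k i) => ?; case: (ltngtP k j) => ?; try lia; lra.
- have e : i = j by apply: val_inj.
  subst j.
  apply: (@inner_gen X i i (fun k => 1 - (k == i)%:R) (fun l => 0)) => // [k l|k]; rewrite /=.
    case: (eqVneq k i) => [->|ne]; first by rewrite sg_self mul0r /= subrr addr0.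
    rewrite /= mulr0n subr0 addr0.
    rewrite /sg; case: (ltngtP k i) => ?; case: (ltngtP l i) => ?; lra.
  case: (eqVneq k i) => [->|ne]; first by rewrite sg_self mul0r /= subrr addr0.
  rewrite /= mulr0n subr0 addr0.
  rewrite /sg; case: (ltngtP k i) => hk; try lra.
  by exfalso; move/eqP: ne; apply; apply: val_inj.
Qed.

Lemma ineqA P : rc P -> (forall p q, 0 <= P p q) -> K P P <= K P (comonotone n).
Proof.
move=> hP hpos; rewrite KR /K; apply: ler_sum => p _.
under eq_bigr do rewrite -mulrA.
rewrite -mulr_sumr; apply: ler_wpM2l => //; exact: inner.
Qed.

Lemma gdiff_ge0 i j : 0 <= g i i - g i j.
Proof.
rewrite /g -mulrBr -sumrB; apply: mulr_ge0; first by rewrite invr_ge0 ler0n.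
apply: sumr_ge0 => k _; rewrite /sg.
case: (ltngtP k i) => ?; case: (ltngtP k j) => ?; lra.
Qed.

Lemma gdiff_gt0 i j : i != j -> 0 < g i i - g i j.
Proof.
move=> ne.
rewrite /g -mulrBr -sumrB; apply: mulr_gt0; first by rewrite invr_gt0 ltr0n.
rewrite (bigD1 j) //=.
have h1 : 0 < sg i j * sg i j - sg i j * sg j j.
  rewrite sg_self mulr0 subr0 /sg.
  case: (ltngtP j i) => hk; try lra.
  by exfalso; move/eqP: ne; apply; apply: val_inj.
have h2 : 0 <= \sum_(k | k != j) (sg i k * sg i k - sg i k * sg j k).
  apply: sumr_ge0 => k _; rewrite /sg.
  case: (ltngtP k i) => ?; case: (ltngtP k j) => ?; lra.
lra.
Qed.

Lemma exists_off P : rc P -> (forall p q, 0 <= P p q) -> P <> comonotone n ->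
  exists i j, i != j /\ 0 < P i j.
Proof.
move=> [hr hc] hpos hne.
case: (boolP [exists i, exists j, (i != j) && (0 < P i j)]).
  by move/existsP=> [i /existsP [j /andP [h1 h2]]]; exists i, j.
move=> hn; exfalso; apply: hne; apply/matrixP => i j.
have off : forall i j, i != j -> P i j = 0.
  move=> i' j' ne; apply/eqP; rewrite eq_le hpos andbT leNgt; apply/negP => hlt.
  apply: (negP hn); apply/existsP; exists i'; apply/existsP; exists j'.
  by rewrite ne hlt.
rewrite comoE; case: (eqVneq i j) => [<-|ne]; last by rewrite off // mulr0.
rewrite mulr1 -(hr i) (bigD1 i) //= big1 ?addr0 // => j' ne'.
by apply: off; rewrite eq_sym.
Qed.

Lemma ineqB P : rc P -> (forall p q, 0 <= P p q) -> P <> comonotone n ->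
  K P (comonotone n) < K (comonotone n) (comonotone n).
Proof.
move=> hP hpos hne.
have eRR : K (comonotone n) (comonotone n) =
    \sum_(p : 'I_n * 'I_n) P p.1 p.2 * g p.1 p.1.
  rewrite KR (sum_row_pair P (fun i => g i i) hP).
  rewrite -(pair_bigA _ (fun i j => (comonotone n : 'M[R]_n) i j * g i j)) /= mulr_sumr.
  apply: eq_bigr => i _.
  transitivity (\sum_j (i == j)%:R * (n%:R^-1 * g i j)).
    by apply: eq_bigr => j _; rewrite comoE; ring.
  by rewrite sum_delta.
rewrite KR eRR -subr_gt0 -sumrB.
under eq_bigr do rewrite -mulrBr.
have [i [j [ne hij]]] := exists_off P hP hpos hne.
rewrite (bigD1 (i, j)) //=.
have h1 : 0 < P i j * (g i i - g i j) by apply: mulr_gt0 => //; exact: gdiff_gt0.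
have h2 : 0 <= \sum_(p | p != (i, j)) P p.1 p.2 * (g p.1 p.1 - g p.1 p.2).
  by apply: sumr_ge0 => p _; apply: mulr_ge0 => //; exact: gdiff_ge0.
lra.
Qed.

Lemma main_sec (P : 'M[R]_n) :
  checkerboard P -> P <> comonotone n ->
  forall a b : R, 0 <= a -> a < b -> b <= 1 ->
    tau (a *: comonotone n + (1 - a) *: P) < tau (b *: comonotone n + (1 - b) *: P).
Proof.
move=> [hpos [hr hc]] hne a b ha hab hb.
have hP : rc P by split.
have A := ineqA P hP hpos.
have B := ineqB P hP hpos hne.
have S := K_sym P (comonotone n).
rewrite !tau_K; try by apply: rc_comb => //; exact: rc_R.
rewrite !K_quad.
move: A B S.
set pp := K P P; set pr := K P (comonotone n); set rp := K (comonotone n) P.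
set rr := K (comonotone n) (comonotone n).
move=> A B S; rewrite -S.
rewrite -subr_gt0.
have -> : b ^+ 2 * rr + b * (1 - b) * pr + b * (1 - b) * pr + (1 - b) ^+ 2 * pp -
  (a ^+ 2 * rr + a * (1 - a) * pr + a * (1 - a) * pr + (1 - a) ^+ 2 * pp)
  = (b - a) * ((a + b) * (rr - pr) + (2 - a - b) * (pr - pp)) by ring.
apply: mulr_gt0; first lra.
have h1 : 0 < (a + b) * (rr - pr) by apply: mulr_gt0; lra.
have h2 : 0 <= (2 - a - b) * (pr - pp) by apply: mulr_ge0; lra.
lra.
Qed.

End S.

Theorem lemma11 (R : realType) (n : nat) (hn : (2 <= n)%N) (P : 'M[R]_n) :
  checkerboard P -> P <> comonotone n ->
  forall a b : R, 0 <= a -> a < b -> b <= 1 ->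
    tau (a *: comonotone n + (1 - a) *: P) < tau (b *: comonotone n + (1 - b) *: P).
Proof.
have n0 : (0 < n)%N by lia.
exact: (@main_sec R n n0 P).
Qed.
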